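(* Let $h\in\mathbb C(s)$ be a rational function whose poles all belong to $\{0,\infty\}$. If $h^{\iota_1}=h$, then there exists $H\in\mathbb C[1/x]$ such that $H(x(s))=h(s)$. Analogously, if $h^{\iota_2}=h$, then there exists $H\in\mathbb C[1/y]$ such that $H(y(s))=h(s)$.
   Context: $x(s),y(s)\in\mathbb C(s)$ are the coordinates of a fixed rational parametrization of the kernel curve of a genus-zero weighted quadrant walk model, with the following known properties: their divisors on $\mathbb P^1$ are $(x)=0+\infty-Q_1-Q_2$ and $(y)=0+\infty-Q_3-Q_4$ for points $Q_i\notin\{0,\infty\}$; there is a real $q\notin\{-1,1\}$ such that, with $\iota_1(s)=1/s$ and $\iota_2(s)=q/s$, the extension $\mathbb C(s)/\mathbb C(x(s))$ is Galois of degree $2$ with group generated by $h\mapsto h^{\iota_1}$, and $\mathbb C(s)/\mathbb C(y(s))$ is Galois of degree $2$ with group generated by $h\mapsto h^{\iota_2}$. Here $h^\tau=h\circ\tau$. *)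

(* Defs.v *)
From mathcomp Require Import all_boot all_algebra.
From mathcomp Require Import complex Rstruct fraction generic_quotient.
Set Implicit Arguments. Unset Strict Implicit. Unset Printing Implicit Defensive.
Import GRing.Theory Num.Theory.
Local Open Scope ring_scope.

Definition C : numClosedFieldType := Rdefinitions.R[i].

Definition RF : fieldType := {fraction {poly C}}.

Definition polyF (p : {poly C}) : RF := FracField.tofrac p.
Definition cstF (c : C) : RF := polyF c%:P.
Definition varF : RF := polyF 'X.

Definition numF (h : RF) : {poly C} := \n_(repr h).
Definition denF (h : RF) : {poly C} := \d_(repr h).

Definition pevalF (P : {poly C}) (u : RF) : RF := (map_poly cstF P).[u].

(* composition h o u = h(u(s)) of rational functions (well defined, i.e.
   independent of the representative, whenever u is non-constant) *)
Definition ratcomp (h u : RF) : RF := pevalF (numF h) u / pevalF (denF h) u.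


(* the involution iota_a : s |-> a/s  (iota_1 = 1/s, iota_2 = q/s) *)
Definition iotaF (a : C) : RF := cstF a / varF.

Definition ord_at (h : RF) (a : C) : int := (mup a (numF h))%:Z - (mup a (denF h))%:Z.
Definition ord_inf (h : RF) : int := (size (denF h))%:Z - (size (numF h))%:Z.

Definition divisor_0inf_minus (h : RF) (Q1 Q2 : C) : Prop :=
  h != 0 /\ ord_inf h = 1 /\
  forall a : C, ord_at h a = (a == 0)%:Z - (a == Q1)%:Z - (a == Q2)%:Z.

Definition regular_at (h : RF) (a : C) : Prop :=
  exists p d : {poly C}, ~~ root d a /\ h = polyF p / polyF d.

Definition poles_in_0_inf (h : RF) : Prop := forall a : C, a != 0 -> regular_at h a.

Definition in_Cfield (u h : RF) : Prop := exists G : RF, h = ratcomp G u.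

(* C(s)/C(u) is Galois with group generated by h |-> h^{iota_a} = ratcomp h (iotaF a):
   the automorphism sigma : h |-> h^{iota_a} fixes C(u) pointwise and the fixed
   field of <sigma> is exactly C(u).  (Since sigma is an involution, Artin's
   theorem then gives degree |<sigma>| = 2 when sigma <> id.) *)
Definition galois_by (u : RF) (a : C) : Prop :=
  (forall h : RF, in_Cfield u h -> ratcomp h (iotaF a) = h) /\
  (forall h : RF, ratcomp h (iotaF a) = h -> in_Cfield u h).

(* Main.v *)
Require Import Defs.
From HB Require Import structures.
From mathcomp Require Import all_boot all_algebra.
From mathcomp Require Import complex Rstruct fraction generic_quotient.
From mathcomp Require Import ring zify.
Import GRing.Theory Num.Theory.
Local Open Scope ring_scope.
Local Open Scope quotient_scope.

Ltac fld := field; try (by repeat (apply/andP; split) => //).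

HB.instance Definition _ := GRing.RMorphism.copy polyF (@FracField.tofrac _).
HB.instance Definition _ := GRing.RMorphism.copy cstF (polyF \o polyC).

Lemma polyF_inj : injective polyF.
Proof. by move=> p q /eqP; rewrite /polyF tofrac_eq => /eqP. Qed.

Lemma polyF_eq0 p : (polyF p == 0) = (p == 0).
Proof. by rewrite /polyF tofrac_eq0. Qed.

Lemma cstF_eq0 c : (cstF c == 0) = (c == 0).
Proof. by rewrite /cstF polyF_eq0 polyC_eq0. Qed.

Lemma polyFC c : polyF c%:P = cstF c. Proof. by []. Qed.
Lemma polyFX : polyF 'X = varF. Proof. by []. Qed.

Lemma pevalFD p q u : pevalF (p + q) u = pevalF p u + pevalF q u.
Proof. by rewrite /pevalF rmorphD hornerD. Qed.
Lemma pevalFB p q u : pevalF (p - q) u = pevalF p u - pevalF q u.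
Proof. by rewrite /pevalF rmorphB hornerD hornerN. Qed.
Lemma pevalFM p q u : pevalF (p * q) u = pevalF p u * pevalF q u.
Proof. by rewrite /pevalF rmorphM hornerM. Qed.
Lemma pevalFXn p n u : pevalF (p ^+ n) u = pevalF p u ^+ n.
Proof. by rewrite /pevalF rmorphXn horner_exp. Qed.
Lemma pevalFC c u : pevalF c%:P u = cstF c.
Proof. by rewrite /pevalF map_polyC hornerC. Qed.
Lemma pevalFX u : pevalF 'X u = u.
Proof. by rewrite /pevalF map_polyX hornerX. Qed.
Lemma pevalFZ c p u : pevalF (c *: p) u = cstF c * pevalF p u.
Proof. by rewrite -mul_polyC pevalFM pevalFC. Qed.
Lemma pevalF0 u : pevalF 0 u = 0.
Proof. by rewrite /pevalF rmorph0 horner0. Qed.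
Lemma pevalF1 u : pevalF 1 u = 1.
Proof. by rewrite /pevalF rmorph1 hornerC. Qed.
Lemma pevalF_comp p q u : pevalF (p \Po q) u = pevalF p (pevalF q u).
Proof. by rewrite /pevalF map_comp_poly horner_comp. Qed.
Lemma pevalF_cst p c : pevalF p (cstF c) = cstF p.[c].
Proof. by rewrite /pevalF horner_map. Qed.

Lemma polyF_peval p : polyF p = pevalF p varF.
Proof.
elim/poly_ind: p => [|p c IH]; first by rewrite pevalF0 rmorph0.
by rewrite pevalFD pevalFM pevalFX pevalFC -IH rmorphD rmorphM.
Qed.
Lemma ratio_pi (r : {ratio {poly C}}) :
  (\pi_RF r) = polyF \n_r / polyF \d_r.
Proof.
rewrite /polyF. unlock FracField.tofrac.
have -> : forall a b : {ratio {poly C}}, (\pi_RF a / \pi_RF b) = \pi_RF (FracField.mulf a (FracField.invf b)).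
  by move=> a b; rewrite FracField.pi_mul FracField.pi_inv.
apply/eqmodP => /=; rewrite FracField.equivfE /=.
rewrite /FracField.mulf /FracField.invf /=.
rewrite !numden_Ratio ?oner_eq0 ?mulf_neq0 ?oner_eq0 ?denom_ratioP //.
by rewrite mulr1 mul1r mulrC.
Qed.

Lemma numden (h : RF) : h = polyF (numF h) / polyF (denF h).
Proof. by rewrite -ratio_pi /numF /denF reprK. Qed.

Lemma denF_neq0 (h : RF) : denF h != 0.
Proof. exact: denom_ratioP. Qed.


Lemma cross (F : fieldType) (a b c d : F) : b != 0 -> d != 0 -> a * d = c * b -> a / b = c / d.
Proof. move=> b0 d0 e. 
transitivity (a * d / (b * d)); first by fld.
by rewrite e; fld. Qed.

Lemma cross' (F : fieldType) (a b c d : F) : b != 0 -> d != 0 -> a / b = c / d -> a * d = c * b.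
Proof. move=> b0 d0 e.
transitivity (a / b * (b * d)); first by fld.
by rewrite e; fld. Qed.

Definition nonconst (u : RF) := forall r, u != cstF r.

Lemma peval_neq0 u P : nonconst u -> P != 0 -> pevalF P u != 0.
Proof.
move=> nc P0; have [r Hr] := closed_field_poly_normal P.
rewrite Hr pevalFZ; apply: mulf_neq0; first by rewrite cstF_eq0 lead_coef_eq0.
elim: r {Hr} => [|z r IH]; first by rewrite big_nil pevalF1; apply: oner_neq0.
rewrite big_cons pevalFM; apply: mulf_neq0; last exact: IH.
rewrite pevalFB pevalFX pevalFC subr_eq0; exact: nc.
Qed.

Lemma ratcomp_rep h u n d : nonconst u -> d != 0 -> h = polyF n / polyF d ->
  ratcomp h u = pevalF n u / pevalF d u.
Proof.
move=> nc d0 hE.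
have E := numden h.
have D0 := denF_neq0 h.
have e : numF h * d = n * denF h.
  apply: polyF_inj. rewrite !rmorphM /=.
  apply: (@cross' RF); [rewrite polyF_eq0; exact: D0|rewrite polyF_eq0; exact: d0|].
  by rewrite -hE -E.
move/(congr1 (pevalF^~ u)): e; rewrite !pevalFM => e.
rewrite /ratcomp; apply: cross => //; apply: peval_neq0 => //.
Qed.

Lemma mup_XsubC1 (a b : C) : mup b ('X - a%:P) = (a == b)%N.
Proof. by have := @mup_XsubCX C 1 b a; rewrite expr1 => ->; case: (a == b). Qed.

Lemma assoc_mup_n n (P Q : {poly C}) : (size P <= n)%N -> P != 0 -> Q != 0 -> size P = size Q ->
  (forall a, mup a P = mup a Q) -> exists c, P = c *: Q.
Proof.
elim: n P Q => [|n IH] P Q.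
  by rewrite leqn0 size_poly_eq0 => /eqP -> /eqP.
move=> sP P0 Q0 sPQ mPQ.
have [s1|s1] := eqVneq (size P) 1%N.
  move: (s1) => /eqP/size_poly1P [p p0 eP].
  move: s1; rewrite sPQ => /eqP/size_poly1P [q q0 eQ]; rewrite eP eQ.
  exists (p / q); rewrite -mul_polyC -polyCM; congr polyC.
  by rewrite mulfVK.
have /closed_rootP [a ra] := s1.
have /factor_theorem [P1 eP] := ra.
have Xa0 : ('X - a%:P) != 0 by rewrite polyXsubC_eq0.
have P10 : P1 != 0 by apply: contraNneq P0 => P10; rewrite eP P10 mul0r.
have : (0 < mup a Q)%N.
  by rewrite -mPQ eP mupM // mup_XsubC1 eqxx addn1.
rewrite -XsubC_dvd // => /divpK eQ.
set Q1 := Q %/ ('X - a%:P) in eQ.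
have Q10 : Q1 != 0 by apply: contraNneq Q0 => Q10; rewrite -eQ Q10 mul0r.
have [c ec] : exists c, P1 = c *: Q1.
  have h1 : (size P1 <= n)%N.
    by move: sP; rewrite eP size_mul // size_XsubC addn2.
  have h2 : size P1 = size Q1.
    by move: sPQ; rewrite eP -eQ !size_mul // size_XsubC !addn2 => -[].
  have h3 : forall b, mup b P1 = mup b Q1.
    move=> b; move: (mPQ b); rewrite eP -eQ !mupM //; exact: addIn.
  exact: IH.
by exists c; rewrite eP ec -eQ scalerAl.
Qed.

Lemma assoc_mup (P Q : {poly C}) : P != 0 -> Q != 0 -> size P = size Q ->
  (forall a, mup a P = mup a Q) -> exists c, P = c *: Q.
Proof. exact: (@assoc_mup_n (size P)). Qed.

Lemma mupX (b : C) : mup b 'X = nat_of_bool (0 == b).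
Proof. by have := mup_XsubC1 0 b; rewrite subr0. Qed.

Lemma numF_neq0 h : h != 0 -> numF h != 0.
Proof.
move=> h0; apply: contra_neq h0 => n0.
by rewrite (numden h) n0 rmorph0 mul0r.
Qed.

Lemma div_form u Qa Qb : divisor_0inf_minus u Qa Qb ->
  exists c, c != 0 /\ u = cstF c * varF / polyF (('X - Qa%:P) * ('X - Qb%:P)).
Proof.
move=> [u0 [oi oa]].
set n := numF u; set d := denF u; set D := ('X - Qa%:P) * ('X - Qb%:P).
have n0 : n != 0 := numF_neq0 u u0.
have d0 : d != 0 := denF_neq0 u.
have D0 : D != 0 by rewrite mulf_neq0 // polyXsubC_eq0.
have X0 : ('X : {poly C}) != 0 by rewrite polyX_eq0.
have [c ec] : exists c, n * D = c *: (d * 'X).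
  apply: assoc_mup; [exact: mulf_neq0 | exact: mulf_neq0 | | ].
    move: oi; rewrite /ord_inf -/n -/d size_mul // size_mulX // /D size_mul ?polyXsubC_eq0 // !size_XsubC.
    move/(congr1 (fun z => z + (size n)%:Z)); rewrite subrK -PoszD => -[] ->.
    rewrite (_ : (2 + 2).-1 = 3)%N // addnS /=; by rewrite addnC.
  move=> a; rewrite !mupM ?polyXsubC_eq0 // mupX !mup_XsubC1.
  move: (oa a); rewrite /ord_at -/n -/d (eq_sym Qa) (eq_sym Qb) (eq_sym 0).
  case: (a == 0); case: (a == Qa); case: (a == Qb); lia.
have c0 : c != 0.
  by apply: contra_neq (mulf_neq0 n0 D0) => c0; rewrite ec c0 scale0r.
exists c; split => //.
rewrite (numden u) -/n -/d.
apply: cross; rewrite ?polyF_eq0 //.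
rewrite -rmorphM ec -mul_polyC !rmorphM /=.
rewrite polyFC polyFX; ring.
Qed.


Lemma polyF_form c (Qa Qb : C) :
  cstF c * varF = polyF (c *: 'X).
Proof. by rewrite -mul_polyC rmorphM. Qed.

Lemma form_nonconst u c (Qa Qb : C) : c != 0 ->
  u = cstF c * varF / polyF (('X - Qa%:P) * ('X - Qb%:P)) -> nonconst u.
Proof.
move=> c0 ue r; apply/negP => /eqP ur.
set D := ('X - Qa%:P) * ('X - Qb%:P) in ue.
have D0 : D != 0 by rewrite mulf_neq0 // polyXsubC_eq0.
have := @cross' RF (cstF c * varF) (polyF D) (cstF r) 1.
rewrite polyF_eq0 divr1 -ue ur mulr1 => /(_ D0 (oner_neq0 _) erefl).
rewrite (polyF_form c Qa Qb) -polyFC -rmorphM => /polyF_inj.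
rewrite mul_polyC => e; move: (congr1 (fun p : {poly C} => size p) e) => /=.
rewrite size_scale // size_polyX.
have [->|r0] := eqVneq r 0; first by rewrite scale0r size_poly0.
rewrite size_scale // /D size_mul ?polyXsubC_eq0 // !size_XsubC.
by [].
Qed.

Lemma iota_nonconst a : a != 0 -> nonconst (iotaF a).
Proof.
move=> a0 r; apply/negP => /eqP ur.
have e : cstF a * 1 = cstF r * varF.
  apply: cross'; [by rewrite polyF_eq0 polyX_eq0 | exact: oner_neq0 | by rewrite divr1; exact: ur].
move: e; rewrite mulr1 -!polyFC -polyFX -rmorphM => /polyF_inj e; move: (congr1 (fun p : {poly C} => p`_0) e) => /=.
rewrite coefC coefMX /= => a0'.
by move: a0; rewrite a0' eqxx.
Qed.

Lemma alg_prod (F : fieldType) (c A QA QB s : F) : c != 0 -> s != 0 ->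
  (A/s - QA)*(A/s-QB) != 0 -> (s-QA)*(s-QB) != 0 ->
  c*(A/s)/((A/s-QA)*(A/s-QB)) = c*s/((s-QA)*(s-QB)) ->
  (A - QA*QB)*s^+2 + (A*(QA*QB) - A^+2) = 0.
Proof.
move=> c0 s0 d1 d2 e; have e2 := @cross' F _ _ _ _ d1 d2 e.
transitivity ((c*(A/s)*((s-QA)*(s-QB)) - c*s*((A/s-QA)*(A/s-QB))) * s / c); first by fld.
by rewrite e2 subrr !mul0r.
Qed.

Lemma prod_eq u a c Qa Qb : a != 0 -> c != 0 ->
  u = cstF c * varF / polyF (('X - Qa%:P) * ('X - Qb%:P)) -> galois_by u a -> Qa * Qb = a.
Proof.
move=> a0 c0 ue [g1 _].
set D := ('X - Qa%:P) * ('X - Qb%:P) in ue.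
have D0 : D != 0 by rewrite mulf_neq0 // polyXsubC_eq0.
have nc := @form_nonconst u c Qa Qb c0 ue.
have nci := @iota_nonconst a a0.
have uu : in_Cfield u u.
  exists varF; rewrite (@ratcomp_rep varF u 'X 1) //.
    by rewrite pevalFX pevalF1 divr1.
    exact: oner_neq0.
  by rewrite rmorph1 divr1.
have := g1 u uu.
rewrite (@ratcomp_rep u (iotaF a) (c *: 'X) D) //; last by rewrite -polyF_form.
rewrite pevalFZ pevalFX pevalFM !pevalFB !pevalFX !pevalFC.
rewrite {1}ue /D rmorphM !rmorphB /= polyFX !polyFC /iotaF => e.
have := @alg_prod RF (cstF c) (cstF a) (cstF Qa) (cstF Qb) varF.
rewrite cstF_eq0 c0 -polyFX polyF_eq0 polyX_eq0 polyFX => /(_ isT isT).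
have d1 : (cstF a / varF - cstF Qa) * (cstF a / varF - cstF Qb) != 0.
  have := @peval_neq0 (iotaF a) D nci D0.
  by rewrite pevalFM !pevalFB !pevalFX !pevalFC.
have d2 : (varF - cstF Qa) * (varF - cstF Qb) != 0.
  have := D0; rewrite -polyF_eq0 /D rmorphM !rmorphB /= polyFX !polyFC; exact.
move=> /(_ d1 d2 e) e2.
have : polyF ((a - Qa * Qb) *: 'X^2 + (a * (Qa * Qb) - a^+2)%:P) = 0.
  rewrite -e2 rmorphD -mul_polyC rmorphM /= polyFC rmorphXn /= polyFX polyFC.
  by rewrite !rmorphB !rmorphM.
move/eqP; rewrite polyF_eq0 => /eqP e3.
move: (congr1 (fun p : {poly C} => p`_2) e3) => /=.
rewrite coefD coefZ coefXn coefC /= mulr1 addr0 coef0 => /eqP.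
by rewrite subr_eq0 => /eqP ->.
Qed.


Lemma cancel_common (F : fieldType) (a b c : F) : b != 0 -> c != 0 -> (a * c) / (b * c) = a / b.
Proof. by move=> b0 c0; fld. Qed.

Lemma inv_cancel (F : fieldType) (a b c : F) : c != 0 -> a * b = c^-1 * a * (c * b).
Proof. by move=> c0; fld. Qed.

Lemma prod_X0 (r : seq C) : (forall z, z \in r -> z = 0) ->
  \prod_(z <- r) ('X - z%:P) = 'X ^+ (size r).
Proof.
elim: r => [|z r IH] H; first by rewrite big_nil expr0.
rewrite big_cons IH; last by move=> w wr; apply: H; rewrite in_cons wr orbT.
by rewrite (H z) ?mem_head // subr0 exprS.
Qed.

Lemma laurent h : poles_in_0_inf h -> exists p m, h = polyF p / varF ^+ m.
Proof.
move=> ph.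
set n0 := numF h; set d0 := denF h.
have d00 : d0 != 0 := denF_neq0 h.
set g := gcdp n0 d0.
have g0 : g != 0 by rewrite gcdp_eq0 negb_and d00 orbT.
set n1 := n0 %/ g; set d1 := d0 %/ g.
have cop : coprimep n1 d1 by apply: coprimep_div_gcd; rewrite d00 orbT.
have en : n0 = n1 * g by rewrite divpK // dvdp_gcdl.
have ed : d0 = d1 * g by rewrite divpK // dvdp_gcdr.
have d10 : d1 != 0 by apply: contra_neq d00 => d10; rewrite ed d10 mul0r.
have hE : h = polyF n1 / polyF d1.
  rewrite (numden h) -/n0 -/d0 en ed !rmorphM /=; apply: cancel_common; by rewrite polyF_eq0.
have nr : forall a, a != 0 -> ~~ root d1 a.
  move=> a a0; have [p [d [rd hd]]] := ph a a0.
  have dn0 : d != 0 by apply: contraNneq rd => ->; rewrite root0.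
  have e : n1 * d = p * d1.
    apply: polyF_inj; rewrite !rmorphM /=; apply: cross'; rewrite ?polyF_eq0 //.
    by rewrite -hE -hd.
  apply/negP => rd1.
  have : ('X - a%:P) %| n1.
    rewrite -(@Gauss_dvdpl _ n1 d); last by rewrite coprimep_sym coprimep_XsubC.
    by rewrite e dvdp_mull // dvdp_XsubCl.
  move=> dv; have := coprimep_dvdr dv cop.
  by rewrite coprimep_sym coprimep_XsubC rd1.
have [r er] := closed_field_poly_normal d1.
have l0 : lead_coef d1 != 0 by rewrite lead_coef_eq0.
have all0 : forall z, z \in r -> z = 0.
  move=> z zr; apply/eqP; apply: contraLR zr => z0.
  have := nr z z0; apply: contra => zr.
  by rewrite er rootZ // root_prod_XsubC.
rewrite prod_X0 in er => //.
exists ((lead_coef d1)^-1 *: n1), (size r).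
rewrite hE {1}er -!mul_polyC !rmorphM /= rmorphXn /= polyFX !polyFC.
rewrite rmorphV ?unitfE //.
apply: cross; rewrite ?mulf_neq0 ?expf_neq0 ?invr_eq0 ?cstF_eq0 //.
  by rewrite -polyFX polyF_eq0 polyX_eq0.
by rewrite -polyFX polyF_eq0 polyX_eq0.
by apply: inv_cancel; rewrite cstF_eq0.
Qed.


Definition Sym (a : C) (p : {poly C}) (m : nat) :=
  pevalF p (iotaF a) / (iotaF a) ^+ m = polyF p / varF ^+ m.

Lemma varF_neq0 : varF != 0.
Proof. by rewrite -polyFX polyF_eq0 polyX_eq0. Qed.

Lemma iotaF_neq0 a : a != 0 -> iotaF a != 0.
Proof.
move=> a0; rewrite /iotaF; apply: mulf_neq0; first by rewrite cstF_eq0.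
by rewrite invr_eq0; exact: varF_neq0.
Qed.

Lemma pow_aux (K : fieldType) (c Aj sj sk : K) : sj != 0 -> c * (Aj / sj) * (sk * sj) = c * Aj * sk.
Proof. by move=> s0; fld. Qed.

Lemma eS_aux (K : fieldType) (P p An vn : K) : An != 0 -> vn != 0 ->
  P / (An / vn) = p / vn -> P * (vn * vn) = An * p.
Proof.
move=> a0 v0 e.
transitivity (P / (An / vn) * An * vn); first by fld.
by rewrite e; fld.
Qed.

Lemma sym_coef (a : C) (p : {poly C}) n : a != 0 -> (size p <= n.*2.+1)%N -> Sym a p n ->
  a ^+ n * p`_0 = p`_(n.*2) * a ^+ (n.*2).
Proof.
move=> a0 sp S.
set R := \sum_(i < n.*2.+1) (p`_i * a ^+ i) *: 'X^(n.*2 - i).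
have eR : pevalF p (iotaF a) * varF ^+ (n.*2) = polyF R.
  have sm : (size (map_poly cstF p) <= n.*2.+1)%N by rewrite size_map_poly.
  rewrite /pevalF (horner_coef_wide _ sm).
  rewrite mulr_suml rmorph_sum /=; apply: eq_bigr => i _.
  rewrite coef_map /= -mul_polyC rmorphM /= polyFC rmorphXn /= polyFX rmorphM rmorphXn /=.
  have hi : (i <= n.*2)%N by have := ltn_ord i; lia.
  rewrite [varF ^+ n.*2](_ : _ = varF ^+ (n.*2 - i) * varF ^+ i); last by rewrite -exprD subnK.
  rewrite /iotaF expr_div_n.
  apply: pow_aux; apply: expf_neq0; exact: varF_neq0.
have eS : pevalF p (iotaF a) * varF ^+ (n.*2) = cstF (a ^+ n) * polyF p.
  move: S; rewrite /Sym /iotaF expr_div_n rmorphXn /= -muln2 exprM expr2 => S.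
  have vn : varF ^+ n != 0 by apply: expf_neq0; exact: varF_neq0.
  have an : cstF a ^+ n != 0 by apply: expf_neq0; rewrite cstF_eq0; exact: a0.
  exact: (@eS_aux RF _ _ _ _ an vn S).
move: eS; rewrite eR -polyFC -rmorphM => /polyF_inj e.
have e0 : R`_0 = ((a ^+ n)%:P * p)`_0 by rewrite e.
move: e0; rewrite coef_sum coefCM => <-.
rewrite big_ord_recr subnn coefZ coefXn eqxx mulr1 big1; first by rewrite /= add0r.
move=> i _; rewrite coefZ coefXn.
have : (i < n.*2)%N := ltn_ord i.
case: (0 == n.*2 - i)%N /eqP => [|_ _]; first lia.
by rewrite mulr0.
Qed.


Lemma W_aux (K : fieldType) (A s : K) : s != 0 -> A != 0 ->
  ((A/s)^+2 + A)/(A/s) = (s^+2 + A)/s /\ (s^+2 + A)/s = s + A/s.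
Proof. by move=> s0 A0; split; fld. Qed.

Lemma sym_W (a : C) n : a != 0 -> Sym a (('X^2 + a%:P)^+n) n /\
  polyF (('X^2 + a%:P)^+n) / varF^+n = (varF + iotaF a)^+n.
Proof.
move=> a0.
have A0 : cstF a != 0 by rewrite cstF_eq0; exact: a0.
have [e1 e2] := @W_aux RF _ _ varF_neq0 A0.
rewrite /Sym pevalFXn pevalFD pevalFXn pevalFX pevalFC rmorphXn /= rmorphD /= rmorphXn /= polyFX polyFC.
rewrite -!expr_div_n /iotaF e1 e2; split; reflexivity.
Qed.

Lemma sym_lin a p q b m : Sym a p m -> Sym a q m -> Sym a (p - b *: q) m.
Proof.
rewrite /Sym => Sp Sq.
rewrite pevalFB pevalFZ rmorphB /= -mul_polyC rmorphM /= polyFC.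
by rewrite !mulrBl -!mulrA Sp Sq.
Qed.

Lemma shift_aux (K : fieldType) (P Q i s im sm : K) : i != 0 -> s != 0 -> im != 0 -> sm != 0 ->
  P * i / (i * im) = Q * s / (s * sm) -> P / im = Q / sm.
Proof.
move=> i0 s0 im0 sm0 e.
transitivity (P * i / (i * im)); first by fld.
by rewrite e; fld.
Qed.

Lemma sym_shift a q m : a != 0 -> Sym a (q * 'X) m.+1 -> Sym a q m.
Proof.
move=> a0; rewrite /Sym pevalFM pevalFX rmorphM /= polyFX !exprS.
have i0 := @iotaF_neq0 a a0.
move=> e; apply: (@shift_aux RF _ _ _ _ _ _ i0 varF_neq0 _ _ e).
- exact: expf_neq0 i0.
- apply: expf_neq0; exact: varF_neq0.
Qed.


Lemma fin_aux (K : fieldType) (Q s sn Wp b : K) : s != 0 -> sn != 0 ->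
  (Q * s + b * Wp) / (s * sn) = Q / sn + b * (Wp / (s * sn)).
Proof. by move=> s0 sn0; fld. Qed.

Lemma sym_poly (a : C) n : a != 0 -> forall p : {poly C}, (size p <= n.*2.+1)%N ->
  Sym a p n -> exists P : {poly C}, polyF p / varF ^+ n = pevalF P (varF + iotaF a).
Proof.
move=> a0; elim: n => [|n IH] p sp S.
  exists (p`_0)%:P; rewrite {1}(size1_polyC sp) expr0 divr1 pevalFC polyFC; reflexivity.
set b := p`_(n.+1).*2.
set W := ('X^2 + a%:P) ^+ n.+1.
have [SW eW] := @sym_W a n.+1 a0.
set p' := p - b *: W.
have Sp' : Sym a p' n.+1 := @sym_lin a p W b n.+1 S SW.
have sW : (size W <= (n.+1).*2.+1)%N.
  have := size_exp ('X^2 + a%:P) n.+1; rewrite size_XnaddC // -/W /=.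
  case: (size W) => [|k] /= h; first by [].
  rewrite h; lia.
have sp' : (size p' <= (n.+1).*2.+1)%N.
  apply: leq_trans (size_polyD _ _) _; rewrite geq_max sp size_polyN /=.
  exact: leq_trans (size_scale_leq _ _) sW.
have W0 : W`_0 = a ^+ n.+1.
  by rewrite -horner_coef0 /W horner_exp hornerD hornerXn hornerC expr0n /= add0r.
have an0 : a ^+ n.+1 != 0 by apply: expf_neq0; exact: a0.
have c0 := @sym_coef a p n.+1 a0 sp S.
have p'0 : p'`_0 = 0.
  rewrite /p' coefB coefZ W0; apply/eqP; rewrite subr_eq0; apply/eqP.
  apply: (mulfI an0); rewrite c0 -/b -addnn exprD; ring.
have p'n : p'`_(n.+1).*2 = 0.
  have := @sym_coef a p' n.+1 a0 sp' Sp'; rewrite p'0 mulr0 => /esym /eqP.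
  rewrite mulf_eq0 => /orP [/eqP //|].
  rewrite expf_eq0 => /andP [_ /eqP a00]; by move: a0; rewrite a00 eqxx.
have sp'2 : (size p' <= (n.+1).*2)%N.
  apply/leq_sizeP => j hj.
  have [-> //|ne] := eqVneq j (n.+1).*2.
  move/leq_sizeP: sp'; apply; lia.
have rp' : root p' 0 by rewrite rootE horner_coef0 p'0.
have [q eq] := factor_theorem _ _ rp'.
rewrite subr0 in eq.
have sq : (size q <= n.*2.+1)%N.
  have [->|q0] := eqVneq q 0; first by rewrite size_poly0.
  move: sp'2; rewrite eq size_mulX //; lia.
have Sq : Sym a q n by apply: sym_shift a0 _; rewrite -eq.
have [P eP] := IH q sq Sq.
exists (P + b *: 'X^(n.+1)).
have ep : p = q * 'X + b *: W by rewrite -eq /p' subrK.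
rewrite ep rmorphD /= rmorphM /= polyFX -mul_polyC rmorphM /= polyFC exprS.
rewrite fin_aux; last (apply: expf_neq0; exact: varF_neq0); last exact: varF_neq0.
rewrite -exprS eW eP pevalFD pevalFZ pevalFXn pevalFX; reflexivity.
Qed.


Lemma self_in u : nonconst u -> in_Cfield u u.
Proof.
move=> nc; exists varF; rewrite (@ratcomp_rep varF u 'X 1) //.
- by rewrite pevalFX pevalF1 divr1.
- exact: oner_neq0.
- by rewrite rmorph1 divr1.
Qed.

Lemma a_neq0 u a Qa Qb : divisor_0inf_minus u Qa Qb -> galois_by u a -> a != 0.
Proof.
move=> dv [g1 _]; have [c [c0 ue]] := @div_form u Qa Qb dv.
have nc := @form_nonconst u c Qa Qb c0 ue.
apply/negP => /eqP a0.
have z : cstF 0 / varF = cstF 0 by rewrite (rmorph0 cstF) mul0r.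
have := g1 u (@self_in u nc); rewrite /ratcomp /iotaF a0 z !pevalF_cst.
rewrite -fmorphV -rmorphM => e.
by move: (nc ((numF u).[0] / (denF u).[0])); rewrite -{1}e /= eqxx.
Qed.

Lemma raise_aux (K : fieldType) (P s : K) m k : s != 0 ->
  P / s ^+ m = P * s ^+ k / s ^+ (m + k).
Proof.
move=> s0; rewrite exprD.
have sk : s ^+ k != 0 by exact: expf_neq0.
have sm : s ^+ m != 0 by exact: expf_neq0.
move: (s ^+ k) (s ^+ m) sk sm => a b a0 b0; fld.
Qed.

Lemma final_aux (K : fieldType) (c s A QA QB : K) : c != 0 -> s != 0 ->
  (s - QA) * (s - QB) != 0 -> QA * QB = A ->
  s + A / s = c * (c * s / ((s - QA) * (s - QB)))^-1 + (QA + QB).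
Proof.
move=> c0 s0 D0 <-; move: (D0); rewrite mulf_eq0 negb_or => /andP [d1 d2].
by field; rewrite d1 d2 s0 c0.
Qed.

Lemma half (u : RF) (Qa Qb a : C) : divisor_0inf_minus u Qa Qb -> galois_by u a ->
  forall h, poles_in_0_inf h -> ratcomp h (iotaF a) = h -> exists H : {poly C}, h = pevalF H u^-1.
Proof.
move=> dv g h ph hs.
have a0 := @a_neq0 u a Qa Qb dv g.
have [c [c0 ue]] := @div_form u Qa Qb dv.
have pr := @prod_eq u a c Qa Qb a0 c0 ue g.
have [p [m hE]] := @laurent h ph.
set k := size p.
have hE2 : h = polyF (p * 'X^k) / varF ^+ (m + k).
  by rewrite hE rmorphM /= rmorphXn /= polyFX; apply: raise_aux; exact: varF_neq0.
have sp : (size (p * 'X^k)%R <= (m + k).*2.+1)%N.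
  have [->|p0] := eqVneq p 0; first by rewrite mul0r size_poly0.
  rewrite size_mulXn // -/k; lia.
have Sp : Sym a (p * 'X^k) (m + k).
  rewrite /Sym -hE2 -hs.
  rewrite (@ratcomp_rep h (iotaF a) (p * 'X^k) ('X^(m + k))).
  - by rewrite pevalFXn pevalFX.
  - exact: (@iota_nonconst a a0).
  - by rewrite -size_poly_eq0 size_polyXn.
  - by rewrite rmorphXn /= polyFX.
have [P eP] := @sym_poly a (m + k) a0 _ sp Sp.
exists (P \Po (c *: 'X + (Qa + Qb)%:P)).
rewrite pevalF_comp pevalFD pevalFZ pevalFX pevalFC hE2 eP.
congr pevalF.
rewrite ue /iotaF rmorphM /= !rmorphB /= polyFX !polyFC rmorphD /=.
apply: final_aux.
- by rewrite cstF_eq0.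
- exact: varF_neq0.
- have := @mulf_neq0 _ ('X - Qa%:P) ('X - Qb%:P); rewrite !polyXsubC_eq0 => /(_ isT isT).
  by rewrite -polyF_eq0 rmorphM /= !rmorphB /= polyFX !polyFC.
- by rewrite -rmorphM /= pr.
Qed.


Theorem lemma2p4 (x y : RF) (Q1 Q2 Q3 Q4 q : C) :
  Q1 != 0 -> Q2 != 0 -> Q3 != 0 -> Q4 != 0 ->
  divisor_0inf_minus x Q1 Q2 -> divisor_0inf_minus y Q3 Q4 ->
  q \is Num.real -> q != 1 -> q != -1 ->
  galois_by x 1 -> galois_by y q ->
  forall h : RF, poles_in_0_inf h ->
    (ratcomp h (iotaF 1) = h -> exists H : {poly C}, h = pevalF H x^-1) /\
    (ratcomp h (iotaF q) = h -> exists H : {poly C}, h = pevalF H y^-1).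
Proof.
move=> _ _ _ _ dx dy _ _ _ gx gy h ph; split.
- exact: (@half x Q1 Q2 1 dx gx h ph).
- exact: (@half y Q3 Q4 q dy gy h ph).
Qed.
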